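(* Let $A=(A_1,A_2,A_3)\in V_3$ satisfy $\sigma_{12}(A)=\sigma_{13}(A)=\sigma_{23}(A)=0$ and suppose $A$ is not similar to an upper triangular $3$-matrix. Then $A$ is similar to a triple of the form $A_1'=\begin{pmatrix}a_1&0\\0&d_1\end{pmatrix}$, $A_2'=\begin{pmatrix}a_2&b_2\\0&d_2\end{pmatrix}$, $A_3'=\begin{pmatrix}a_3&0\\c_3&d_3\end{pmatrix}$ with $e_2e_3+b_2c_3=0$ and $e_1b_2c_3\neq 0$, where $e_j=a_j-d_j$.
   Context: $V_3=(M_{2\times2}(\mathbb{C}))^{\times 3}$ with $GL(2,\mathbb{C})$ acting by simultaneous conjugation; two elements are similar if they lie in the same orbit. A $3$-matrix is upper triangular if all components are upper triangular. With $t_j=\mathsf{tr}(A_j)$, $t_{jk}=\mathsf{tr}(A_jA_k)$, define $\tau_{jk}=t_{jk}-\tfrac12t_jt_k$ and $\sigma_{jk}=\tau_{jk}^2-\tau_{jj}\tau_{kk}$. *)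

(* Defs.v *)
From HB Require Import structures.
From mathcomp Require Import all_boot all_order all_algebra.
From mathcomp Require Import reals.
From mathcomp Require Import complex.
Set Implicit Arguments. Unset Strict Implicit. Unset Printing Implicit Defensive.
Import Order.TTheory GRing.Theory Num.Theory.
Local Open Scope ring_scope.
Local Open Scope complex_scope.

Section Defs.
Variable R : realType.
Notation C := (R[i]).

(* A 3-matrix: an element of V_3 = (M_2(C))^3, indexed by 'I_3 (j = 0,1,2
   corresponds to the paper's indices 1,2,3). *)
Definition i1 : 'I_3 := @Ordinal 3 0 isT.
Definition i2 : 'I_3 := @Ordinal 3 1 isT.
Definition i3 : 'I_3 := @Ordinal 3 2 isT.

Definition V3 := 'I_3 -> 'M[C]_2.

Definition similar3 (A B : V3) : Prop :=
  exists P : 'M[C]_2, P \in unitmx /\ forall j, B j = invmx P *m A j *m P.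

(* upper triangular 2x2 matrix: entries below the diagonal vanish
   (mathcomp's is_trig_mx is lower triangularity, hence the transpose) *)
Definition upper_tri (M : 'M[C]_2) : bool := is_trig_mx M^T.
Definition upper_tri3 (A : V3) : Prop := forall j, upper_tri (A j).

Definition tr1 (A : V3) j : C := \tr (A j).
Definition tr2 (A : V3) j k : C := \tr (A j *m A k).
Definition tau (A : V3) j k : C := tr2 A j k - 2^-1 * tr1 A j * tr1 A k.
Definition sigma (A : V3) j k : C := tau A j k ^+ 2 - tau A j j * tau A k k.

Definition mx2 (a b c d : C) : 'M[C]_2 :=
  \matrix_(i < 2, j < 2)
    (if (i == 0 :> nat) then (if (j == 0 :> nat) then a else b)
     else (if (j == 0 :> nat) then c else d)).

Definition triple (M1 M2 M3 : 'M[C]_2) : V3 :=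
  fun j => if (j == 0 :> nat) then M1 else if (j == 1 :> nat) then M2 else M3.
End Defs.

(* Main.v *)
Require Import Defs.
From HB Require Import structures.
From mathcomp Require Import all_boot all_order all_algebra.
From mathcomp Require Import reals.
From mathcomp Require Import complex.
From mathcomp Require Import ring.
Import Order.TTheory GRing.Theory Num.Theory.
Local Open Scope ring_scope.
Local Open Scope complex_scope.

Section L.
Variable R : realType.
Local Notation C := (R[i]).
Implicit Types (M N P : 'M[C]_2) (A B : V3 R).

Lemma mx2E M : M = mx2 (M 0 0) (M 0 1) (M 1 0) (M 1 1).
Proof. by apply/matrixP => i j; rewrite !mxE; case: i => [[|[|]]] //= ?; case: j => [[|[|]]] //= ?;
  congr (M _ _); apply/val_inj. Qed.

Lemma mx2_00 (a b c d : C) : mx2 a b c d 0 0 = a. Proof. by rewrite mxE. Qed.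
Lemma mx2_01 (a b c d : C) : mx2 a b c d 0 1 = b. Proof. by rewrite mxE. Qed.
Lemma mx2_10 (a b c d : C) : mx2 a b c d 1 0 = c. Proof. by rewrite mxE. Qed.
Lemma mx2_11 (a b c d : C) : mx2 a b c d 1 1 = d. Proof. by rewrite mxE. Qed.

Lemma big2 (F : 'I_2 -> C) : \sum_(i < 2) F i = F 0 + F 1.
Proof. rewrite big_ord_recl big_ord1. by congr (F _ + F _); apply/val_inj. Qed.

Lemma mx2_mul (a b c d a' b' c' d' : C) :
  mx2 a b c d *m mx2 a' b' c' d' =
  mx2 (a * a' + b * c') (a * b' + b * d') (c * a' + d * c') (c * b' + d * d').
Proof. by apply/matrixP => i j; rewrite !mxE big2 !mxE;
  case: i => [[|[|]]] //= ?; case: j => [[|[|]]] //= ?. Qed.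

Lemma tr_mx2 (a b c d : C) : \tr (mx2 a b c d) = a + d.
Proof. by rewrite /mxtrace big2 !mxE. Qed.

Lemma det_mx2 (a b c d : C) : \det (mx2 a b c d) = a * d - b * c.
Proof. by rewrite (expand_det_row _ 0) big2 /cofactor !mxE /= !det_mx11 !mxE /=
   expr0 expr1 mul1r mulN1r mulrN. Qed.


Lemma mx2_1 : (1%:M : 'M[C]_2) = mx2 1 0 0 1.
Proof. by rewrite [LHS]mx2E !mxE. Qed.

Lemma unit_mx2 (p q r s : C) : p * s - q * r != 0 -> mx2 p q r s \in unitmx.
Proof. by move=> h; rewrite unitmxE det_mx2 unitfE. Qed.

Lemma inv_mx2 (p q r s : C) : p * s - q * r != 0 ->
  invmx (mx2 p q r s) = mx2 (s / (p * s - q * r)) (- q / (p * s - q * r))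
                          (- r / (p * s - q * r)) (p / (p * s - q * r)).
Proof.
move=> h.
have PQ : mx2 p q r s *m mx2 (s / (p * s - q * r)) (- q / (p * s - q * r))
                          (- r / (p * s - q * r)) (p / (p * s - q * r)) = 1%:M.
  by rewrite mx2_1 mx2_mul; congr mx2; field.
by rewrite -[RHS]mul1mx -(mulVmx (unit_mx2 p q r s h)) -mulmxA PQ mulmx1.
Qed.

Definition cj P M := invmx P *m M *m P.

Lemma cjE (p q r s a b c d : C) : p * s - q * r != 0 ->
  cj (mx2 p q r s) (mx2 a b c d) =
  mx2 ((s * (a * p + b * r) - q * (c * p + d * r)) / (p * s - q * r))
      ((s * (a * q + b * s) - q * (c * q + d * s)) / (p * s - q * r))
      ((- r * (a * p + b * r) + p * (c * p + d * r)) / (p * s - q * r))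
      ((- r * (a * q + b * s) + p * (c * q + d * s)) / (p * s - q * r)).
Proof. by move=> h; rewrite /cj inv_mx2 // !mx2_mul; congr mx2; field. Qed.

Lemma upper_triP M : upper_tri M = (M 1 0 == 0).
Proof.
apply/idP/idP.
  by move/forallP/(_ 0)/forallP/(_ 1); rewrite mxE.
move=> h; apply/forallP => i; apply/forallP => j; apply/implyP.
case: i => [[|[|]]] //= ? ; case: j => [[|[|]]] //= ? _.
by rewrite mxE; move: h; congr (M _ _ == 0); apply/val_inj.
Qed.

Lemma inv_uniq P Q : P \in unitmx -> P *m Q = 1%:M -> invmx P = Q.
Proof. by move=> uP PQ; rewrite -[RHS]mul1mx -(mulVmx uP) -mulmxA PQ mulmx1. Qed.

Lemma invmxM2 P Q : P \in unitmx -> Q \in unitmx -> invmx (P *m Q) = invmx Q *m invmx P.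
Proof.
move=> uP uQ; apply: inv_uniq; first by rewrite unitmx_mul uP uQ.
by rewrite -mulmxA (mulmxA Q) mulmxV // mul1mx mulmxV.
Qed.

Lemma sim_refl A : similar3 A A.
Proof. by exists 1%:M; split; [exact: unitmx1| move=> j; rewrite invmx1 mul1mx mulmx1]. Qed.

Lemma sim_trans A B D : similar3 A B -> similar3 B D -> similar3 A D.
Proof.
move=> [P [uP hP]] [Q [uQ hQ]]; exists (P *m Q); split.
  by rewrite unitmx_mul uP uQ.
by move=> j; rewrite hQ hP invmxM2 // !mulmxA.
Qed.

Lemma sim_cj A P : P \in unitmx -> similar3 A (fun j => cj P (A j)).
Proof. by move=> uP; exists P. Qed.

Lemma sigma_sim A B j k : similar3 A B -> sigma B j k = sigma A j k.
Proof.
move=> [P [uP hP]].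
have t1 : forall l, tr1 B l = tr1 A l.
  by move=> l; rewrite /tr1 hP mxtrace_mulC mulmxA mulmxV // mul1mx.
have t2 : forall l m, tr2 B l m = tr2 A l m.
  move=> l m; rewrite /tr2 !hP !mulmxA mulmxK // mxtrace_mulC.
  by rewrite !mulmxA mulmxV // mul1mx.
by rewrite /sigma /tau !t1 !t2.
Qed.

Definition tauM M N : C := \tr (M *m N) - 2^-1 * \tr M * \tr N.
Definition sigmaM M N : C := tauM M N ^+ 2 - tauM M M * tauM N N.

Lemma sigmaE A j k : sigma A j k = sigmaM (A j) (A k).
Proof. by []. Qed.

Lemma S1 (a b d p q r s : C) : sigmaM (mx2 a b 0 d) (mx2 p q r s) =
  r * ((a - d) * (p - s) * b + b ^+ 2 * r - (a - d) ^+ 2 * q).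
Proof. rewrite /sigmaM /tauM !mx2_mul !tr_mx2. by field. Qed.

Lemma S2 (a2 b2 d2 a3 c3 d3 : C) : sigmaM (mx2 a2 b2 0 d2) (mx2 a3 0 c3 d3) =
  b2 * c3 * ((a2 - d2) * (a3 - d3) + b2 * c3).
Proof. rewrite /sigmaM /tauM !mx2_mul !tr_mx2. by field. Qed.

Lemma cj1 M : cj 1%:M M = M.
Proof. by rewrite /cj invmx1 mul1mx mulmx1. Qed.

Lemma cj_mul P Q M : P \in unitmx -> Q \in unitmx -> cj (P *m Q) M = cj Q (cj P M).
Proof. by move=> uP uQ; rewrite /cj invmxM2 // !mulmxA. Qed.

Lemma cj_scal P (a : C) : P \in unitmx -> cj P (mx2 a 0 0 a) = mx2 a 0 0 a.
Proof.
move=> uP; have -> : mx2 a 0 0 a = a%:M.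
  by rewrite [RHS]mx2E !mxE /= mulr1n mulr0n.
by rewrite /cj scalar_mxC -mulmxA mulVmx // mulmx1.
Qed.

Lemma sigmaM_cj P M N : P \in unitmx -> sigmaM (cj P M) (cj P N) = sigmaM M N.
Proof.
move=> uP.
have t1 : forall X, \tr (cj P X) = \tr X.
  by move=> X; rewrite /cj mxtrace_mulC mulmxA mulmxV // mul1mx.
have t2 : forall X Y, \tr (cj P X *m cj P Y) = \tr (X *m Y).
  move=> X Y; rewrite /cj !mulmxA mulmxK // mxtrace_mulC.
  by rewrite !mulmxA mulmxV // mul1mx.
have t3 : forall X Y, tauM (cj P X) (cj P Y) = tauM X Y.
  by move=> X Y; rewrite /tauM t2 (t1 X) (t1 Y).
by rewrite /sigmaM !t3.
Qed.

Lemma tri1 M : exists P, P \in unitmx /\ upper_tri (cj P M).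
Proof.
rewrite (mx2E M); move: (M 0 0) (M 0 1) (M 1 0) (M 1 1) => a b c d.
have [c0|cn0] := eqVneq c 0.
  by exists 1%:M; split; [exact: unitmx1| rewrite cj1 upper_triP mx2_10 c0].
have [l hl] := @solve_monicpoly C 2%N (fun i => if i is 0%N then - (a * d - b * c) else a + d) isT.
rewrite big2 /= expr0 expr1 mulr1 in hl.
have dn : (l - d) * 0 - 1 * c != 0 by rewrite mulr0 mul1r sub0r oppr_eq0.
exists (mx2 (l - d) 1 c 0); split; first exact: unit_mx2.
rewrite upper_triP cjE // mx2_10; rewrite mulf_eq0; apply/orP; left; apply/eqP.
transitivity (c * (l ^+ 2 - (- (a * d - b * c) + (a + d) * l))); first by ring.
by rewrite hl subrr mulr0.
Qed.

Lemma L_w (a b d p q r s : C) : a - d != 0 ->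
  (a - d) * (p - s) * b + b ^+ 2 * r - (a - d) ^+ 2 * q = 0 ->
  upper_tri (cj (mx2 b 1 (- (a - d)) 0) (mx2 p q r s)).
Proof.
move=> he hK.
have dn : b * 0 - 1 * (- (a - d)) != 0 by rewrite mulr0 mul1r sub0r opprK.
rewrite upper_triP cjE // mx2_10; rewrite mulf_eq0; apply/orP; left; apply/eqP.
by rewrite -[RHS]hK; ring.
Qed.

Lemma tri2_core (a b d p q r s : C) : sigmaM (mx2 a b 0 d) (mx2 p q r s) = 0 ->
  exists P, P \in unitmx /\ upper_tri (cj P (mx2 a b 0 d)) /\ upper_tri (cj P (mx2 p q r s)).
Proof.
rewrite S1 => /eqP; rewrite mulf_eq0 => /orP [/eqP r0|/eqP hK].
  by exists 1%:M; split; [exact: unitmx1| rewrite !cj1 !upper_triP !mx2_10 r0].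
have [he|he] := eqVneq (a - d) 0.
  have : b ^+ 2 * r = 0 by rewrite -[RHS]hK he; ring.
  move/eqP; rewrite mulf_eq0 expf_eq0 /= => /orP [/eqP b0|/eqP r0].
    move/eqP: he; rewrite subr_eq0 => /eqP ad; rewrite b0 ad.
    have [P [uP hP]] := tri1 (mx2 p q r s).
    exists P; split; first exact: uP.
    by split; [rewrite cj_scal // upper_triP mx2_10 | exact: hP].
  by exists 1%:M; split; [exact: unitmx1| rewrite !cj1 !upper_triP !mx2_10 r0].
have dn : b * 0 - 1 * (- (a - d)) != 0 by rewrite mulr0 mul1r sub0r opprK.
exists (mx2 b 1 (- (a - d)) 0); split; first exact: unit_mx2.
split; apply: L_w; [exact: he| |exact: he|exact: hK]; ring.
Qed.

Lemma tri2 M N : sigmaM M N = 0 ->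
  exists P, P \in unitmx /\ upper_tri (cj P M) /\ upper_tri (cj P N).
Proof.
move=> hs; have [P0 [u0 h0]] := tri1 M.
have eM : cj P0 M = mx2 (cj P0 M 0 0) (cj P0 M 0 1) 0 (cj P0 M 1 1).
  by rewrite {1}(mx2E (cj P0 M)); move: h0; rewrite upper_triP => /eqP ->.
have eN := mx2E (cj P0 N).
have : sigmaM (cj P0 M) (cj P0 N) = 0 by rewrite sigmaM_cj.
rewrite eM eN => /tri2_core [P1 [u1 [h1 h2]]].
exists (P0 *m P1); split; first by rewrite unitmx_mul u0 u1.
rewrite !(cj_mul _ _ _ u0 u1).
split; [rewrite eM; exact: h1 | rewrite eN; exact: h2].
Qed.


Definition triA (A : V3 R) := exists B, similar3 A B /\ upper_tri3 B.

Definition concl (A : V3 R) : Prop :=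
  exists a1 d1 a2 b2 d2 a3 c3 d3 : C,
    similar3 A (triple (mx2 a1 0 0 d1) (mx2 a2 b2 0 d2) (mx2 a3 0 c3 d3)) /\
    (a2 - d2) * (a3 - d3) + b2 * c3 = 0 /\
    (a1 - d1) * b2 * c3 != 0.

Lemma ord3 (Q : 'I_3 -> Prop) : Q i1 -> Q i2 -> Q i3 -> forall j, Q j.
Proof.
move=> h1 h2 h3 [m hm]; case: m hm => [|[|[|m]]] hm //.
- by rewrite (_ : Ordinal hm = i1) //; apply/val_inj.
- by rewrite (_ : Ordinal hm = i2) //; apply/val_inj.
- by rewrite (_ : Ordinal hm = i3) //; apply/val_inj.
Qed.

Lemma tri_of (A : V3 R) P : P \in unitmx -> (forall j, upper_tri (cj P (A j))) -> triA A.
Proof. by move=> uP h; exists (fun j => cj P (A j)); split; [exact: sim_cj | exact: h]. Qed.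

Lemma z_div (x y : C) : x = 0 -> x / y = 0.
Proof. by move=> ->; rewrite mul0r. Qed.

Lemma swap_tri (x y z w : C) : y = 0 -> upper_tri (cj (mx2 0 1 1 0) (mx2 x y z w)).
Proof.
move=> y0; have dn : (0 : C) * 0 - 1 * 1 != 0 by rewrite mulr0 mul1r sub0r oppr_eq0 oner_eq0.
rewrite upper_triP cjE // mx2_10; apply/eqP; apply: z_div; rewrite y0; ring.
Qed.

Lemma finish (A : V3 R) P : P \in unitmx -> ~ triA A -> sigma A i2 i3 = 0 ->
  cj P (A i1) 0 1 = 0 -> cj P (A i1) 1 0 = 0 -> cj P (A i2) 1 0 = 0 ->
  cj P (A i3) 0 1 = 0 -> cj P (A i1) 0 0 - cj P (A i1) 1 1 != 0 ->
  concl A.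
Proof.
move=> uP nt h23 z1 z2 z3 z4 hne.
pose T := fun j => cj P (A j).
pose a1 := T i1 0 0; pose d1 := T i1 1 1; pose a2 := T i2 0 0.
pose b2 := T i2 0 1; pose d2 := T i2 1 1; pose a3 := T i3 0 0.
pose c3 := T i3 1 0; pose d3 := T i3 1 1.
exists a1, d1, a2, b2, d2, a3, c3, d3.
pose Tr := triple (mx2 a1 0 0 d1) (mx2 a2 b2 0 d2) (mx2 a3 0 c3 d3).
have eT : forall j, Tr j = T j.
  apply: ord3; rewrite /Tr /triple /=.
  - by rewrite /T [RHS]mx2E z1 z2.
  - by rewrite /T [RHS]mx2E z3.
  - by rewrite /T [RHS]mx2E z4.
have simT : similar3 A Tr by exists P; split; [exact: uP | move=> j; rewrite eT].
have sig := sigma_sim _ _ i2 i3 simT.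
rewrite h23 sigmaE /Tr /triple /= S2 in sig.
have c3n : c3 != 0.
  apply/eqP => c30; apply: nt; exists Tr; split; first exact: simT.
  by apply: ord3; rewrite /Tr /triple /= upper_triP mx2_10 ?c30 eqxx.
have b2n : b2 != 0.
  apply/eqP => b20; apply: nt.
  have sw : mx2 (0 : C) 1 1 0 \in unitmx.
    by apply: unit_mx2; rewrite mulr0 mul1r sub0r oppr_eq0 oner_eq0.
  exists (fun j => cj (mx2 0 1 1 0) (Tr j)); split.
    exact: (sim_trans _ _ _ simT (sim_cj _ _ sw)).
  by apply: ord3; rewrite /Tr /triple /=; apply: swap_tri.
split; first exact: simT.
have bc : b2 * c3 != 0 by rewrite mulf_neq0.
split; last by rewrite -mulrA mulf_neq0.
by move/eqP: sig; rewrite mulf_eq0 (negbTE bc) /= => /eqP.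
Qed.


Lemma neq_from (x y : C) : x = y -> y != 0 -> x != 0.
Proof. by move->. Qed.

Lemma core (A : V3 R) (a b d p2 q2 r2 s2 p3 q3 r3 s3 : C) :
  A i1 = mx2 a b 0 d -> A i2 = mx2 p2 q2 r2 s2 -> A i3 = mx2 p3 q3 r3 s3 ->
  sigma A i1 i2 = 0 -> sigma A i1 i3 = 0 -> sigma A i2 i3 = 0 -> ~ triA A -> concl A.
Proof.
move=> e1 e2 e3 h12 h13 h23 nt.
rewrite sigmaE e1 e2 S1 in h12.
rewrite sigmaE e1 e3 S1 in h13.
have u1 : (1%:M : 'M[C]_2) \in unitmx by exact: unitmx1.
have [he|he] := eqVneq (a - d) 0.
  have [b0|bn] := eqVneq b 0.
    have [P [uP [hP2 hP3]]] := tri2 (A i2) (A i3) h23.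
    exfalso; apply: nt; apply: (tri_of _ _ uP); apply: ord3.
    - move/eqP: he; rewrite subr_eq0 => /eqP ad.
      by rewrite e1 b0 ad (cj_scal _ _ uP) upper_triP mx2_10 eqxx.
    - exact: hP2.
    - exact: hP3.
  rewrite he in h12 h13.
  have r2z : r2 = 0.
    have : r2 ^+ 2 * b ^+ 2 = 0 by rewrite -[RHS]h12; ring.
    by move/eqP; rewrite mulf_eq0 !expf_eq0 /= (negbTE bn) orbF => /eqP.
  have r3z : r3 = 0.
    have : r3 ^+ 2 * b ^+ 2 = 0 by rewrite -[RHS]h13; ring.
    by move/eqP; rewrite mulf_eq0 !expf_eq0 /= (negbTE bn) orbF => /eqP.
  exfalso; apply: nt; apply: (tri_of _ _ u1); apply: ord3; rewrite cj1 upper_triP.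
  - by rewrite e1 mx2_10 eqxx.
  - by rewrite e2 mx2_10 r2z eqxx.
  - by rewrite e3 mx2_10 r3z eqxx.
move/eqP: h12; rewrite mulf_eq0 => /orP [/eqP r2z|/eqP K2];
move/eqP: h13; rewrite mulf_eq0 => /orP [/eqP r3z|/eqP K3].
- exfalso; apply: nt; apply: (tri_of _ _ u1); apply: ord3; rewrite cj1 upper_triP.
  + by rewrite e1 mx2_10 eqxx.
  + by rewrite e2 mx2_10 r2z eqxx.
  + by rewrite e3 mx2_10 r3z eqxx.
- have dn : 1 * (- (a - d)) - b * 0 != 0 by rewrite mul1r mulr0 subr0 oppr_eq0.
  have uP := unit_mx2 _ _ _ _ dn.
  apply: (finish _ _ uP nt h23).
  + by rewrite e1 cjE // mx2_01; apply: z_div; ring.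
  + by rewrite e1 cjE // mx2_10; apply: z_div; ring.
  + by rewrite e2 r2z cjE // mx2_10; apply: z_div; ring.
  + rewrite e3 cjE // mx2_01; apply: z_div.
    by transitivity (- ((a - d) * (p3 - s3) * b + b ^+ 2 * r3 - (a - d) ^+ 2 * q3));
      [ring | rewrite K3 oppr0].
  + rewrite e1 cjE // mx2_00 mx2_11 -mulrBl; apply: mulf_neq0; last by rewrite invr_eq0.
    apply: (neq_from _ (- (a - d) ^+ 2)); first by ring.
    by rewrite oppr_eq0 expf_neq0.
- have dn : b * 0 - 1 * (- (a - d)) != 0 by rewrite mul1r mulr0 sub0r opprK.
  have uP := unit_mx2 _ _ _ _ dn.
  apply: (finish _ _ uP nt h23).
  + by rewrite e1 cjE // mx2_01; apply: z_div; ring.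
  + by rewrite e1 cjE // mx2_10; apply: z_div; ring.
  + rewrite e2 cjE // mx2_10; apply: z_div.
    by transitivity ((a - d) * (p2 - s2) * b + b ^+ 2 * r2 - (a - d) ^+ 2 * q2);
      [ring | rewrite K2].
  + by rewrite e3 r3z cjE // mx2_01; apply: z_div; ring.
  + rewrite e1 cjE // mx2_00 mx2_11 -mulrBl; apply: mulf_neq0; last by rewrite invr_eq0.
    apply: (neq_from _ (- (a - d) ^+ 2)); first by ring.
    by rewrite oppr_eq0 expf_neq0.
- have dn : b * 0 - 1 * (- (a - d)) != 0 by rewrite mul1r mulr0 sub0r opprK.
  have uP := unit_mx2 _ _ _ _ dn.
  exfalso; apply: nt; apply: (tri_of _ _ uP); apply: ord3.
  + by rewrite e1; apply: L_w; [exact: he | ring].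
  + by rewrite e2; apply: L_w; [exact: he | exact: K2].
  + by rewrite e3; apply: L_w; [exact: he | exact: K3].
Qed.

Lemma main_sec (A : V3 R) :
  sigma A i1 i2 = 0 -> sigma A i1 i3 = 0 -> sigma A i2 i3 = 0 ->
  ~ (exists B : V3 R, similar3 A B /\ upper_tri3 B) -> concl A.
Proof.
move=> h12 h13 h23 nt.
have [P1 [u1 ht]] := tri1 (A i1).
pose B := fun j => cj P1 (A j).
have sAB : similar3 A B := sim_cj _ _ u1.
have ntB : ~ triA B.
  move=> [D [sBD uD]]; apply: nt; exists D; split; [exact: (sim_trans _ _ _ sAB sBD) | exact: uD].
suff : concl B.
  move=> [a1 [d1 [a2 [b2 [d2 [a3 [c3 [d3 [hs hr]]]]]]]]].
  exists a1, d1, a2, b2, d2, a3, c3, d3; split; [exact: (sim_trans _ _ _ sAB hs) | exact: hr].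
have eB1 : B i1 = mx2 (B i1 0 0) (B i1 0 1) 0 (B i1 1 1).
  by rewrite {1}(mx2E (B i1)); move: ht; rewrite upper_triP => /eqP ->.
apply: (core _ _ _ _ _ _ _ _ _ _ _ _ eB1 (mx2E (B i2)) (mx2E (B i3))).
- by rewrite (sigma_sim _ _ _ _ sAB).
- by rewrite (sigma_sim _ _ _ _ sAB).
- by rewrite (sigma_sim _ _ _ _ sAB).
- exact: ntB.
Qed.

End L.

Theorem lemma2p10 (R : realType) (A : V3 R) :
  sigma A i1 i2 = 0 -> sigma A i1 i3 = 0 -> sigma A i2 i3 = 0 ->
  ~ (exists B : V3 R, similar3 A B /\ upper_tri3 B) ->
  exists a1 d1 a2 b2 d2 a3 c3 d3 : R[i],
    similar3 A (triple (mx2 a1 0 0 d1) (mx2 a2 b2 0 d2) (mx2 a3 0 c3 d3)) /\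
    (a2 - d2) * (a3 - d3) + b2 * c3 = 0 /\
    (a1 - d1) * b2 * c3 != 0.
Proof. exact: (@main_sec R A). Qed.
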